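(* Let $p$ be an odd prime, $S$ a symmetric multiset of elements of $\mathbb Z_p^n$, $G=\mathrm{Cay}(\mathbb Z_p^n,S)$, $S'=\biguplus_{k=1}^{(p-1)/2}kS$ (multiset union, $kS=\{ks:s\in S\}$), and $G'=\mathrm{Cay}(\mathbb Z_p^n,S')$. Then $$\phi(G)\le\phi(G')\le\frac{p+1}{4}\,\phi(G).$$
   Context: A multiset $S$ is symmetric if $x$ and $-x$ have equal multiplicity for all $x$. $\mathrm{Cay}(\Gamma,S)$ has vertex set $\Gamma$ and an edge $(v,v+s)$ for every $v$ and every element $s$ of $S$ (with multiplicity). For $Q\subseteq\Gamma$, $\partial Q$ is the multiset of edges $(i,j)$ with $i\in Q$, $j\notin Q$; $\phi_G(Q)=|\partial Q|/(|S||Q|)$ and $\phi(G)=\min\{\phi_G(Q):1\le|Q|\le|\Gamma|/2\}$. *)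

(* Defs.v *)
From HB Require Import structures.
From mathcomp Require Import all_boot all_order all_algebra.
Set Implicit Arguments. Unset Strict Implicit. Unset Printing Implicit Defensive.
Import Order.TTheory GRing.Theory Num.Theory.
Local Open Scope ring_scope.

(* A multiset of group elements is a sequence (order irrelevant). *)
Definition symmetric_ms (V : zmodType) (S : seq V) : Prop :=
  forall x : V, count_mem x S = count_mem (- x) S.

Definition edge_boundary (V : finZmodType) (S : seq V) (Q : {set V}) : nat :=
  \sum_(v in Q) count (fun s : V => (v + s)%R \notin Q) S.

Definition cond_set (V : finZmodType) (S : seq V) (Q : {set V}) : rat :=
  (edge_boundary S Q)%:R / (size S * #|Q|)%:R.

(* φ(G) = min { φ_G(Q) : 1 <= |Q| <= |Γ|/2 }.  All φ_G(Q) lie in [0,1],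
   so 1 is a neutral element for this minimum. *)
Definition cheeger (V : finZmodType) (S : seq V) : rat :=
  \big[Order.min/1]_(Q : {set V} | (0 < #|Q|)%N && (2 * #|Q| <= #|V|)%N)
     cond_set S Q.

Definition scale_ms (V : zmodType) (k : nat) (S : seq V) : seq V :=
  [seq s *+ k | s <- S].

Definition multi_ms (V : zmodType) (p : nat) (S : seq V) : seq V :=
  flatten [seq scale_ms k S | k <- iota 1 (p.-1)./2].

(* Main.v *)
Require Import Defs.
From HB Require Import structures.
From mathcomp Require Import all_boot all_order all_algebra.
From mathcomp Require Import zify ring lra.
Import Order.TTheory GRing.Theory Num.Theory.
Local Open Scope ring_scope.

Section Comb.
Variable V : finZmodType.

Definition Abd (Q : {set V}) (s : V) : nat :=
  \sum_(v in Q) nat_of_bool ((v + s)%R \notin Q).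

Lemma eb_sum (S : seq V) Q : edge_boundary S Q = (\sum_(s <- S) Abd Q s)%N.
Proof.
rewrite /edge_boundary; elim: S => [|x S IH].
  by rewrite big_nil big1.
by rewrite big_cons -IH /Abd -big_split; apply: eq_bigr => v _ /=.
Qed.

Lemma Abd0 Q : Abd Q 0 = 0%N.
Proof. by rewrite /Abd big1 // => v vQ; rewrite addr0 vQ. Qed.

Lemma Abd_sub Q a b : (Abd Q (a + b)%R <= Abd Q a + Abd Q b)%N.
Proof.
rewrite /Abd.
apply: (@leq_trans (\sum_(v in Q) (nat_of_bool ((v + a)%R \notin Q) +
    nat_of_bool (((v + a)%R \in Q) && ((v + a + b)%R \notin Q))))%N).
  apply: leq_sum => v _; rewrite addrA.
  by case: (v + a \in Q); case: (v + a + b \in Q).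
rewrite big_split leq_add2l /=.
apply: (@leq_trans (\sum_(v : V) nat_of_bool (((v + a)%R \in Q) && ((v + a + b)%R \notin Q)))%N).
  by rewrite [X in (_ <= X)%N](bigID (mem Q)) /= leq_addr.
rewrite (reindex (fun w => w - a)) /=; last first.
  by exists (fun v => v + a) => x _; rewrite ?subrK ?addrK.
rewrite [X in (_ <= X)%N]big_mkcond /=; apply: leq_sum => w _.
by rewrite subrK; case: (w \in Q).
Qed.

Lemma Abd_mul Q s k : (Abd Q (s *+ k)%R <= k * Abd Q s)%N.
Proof.
elim: k => [|k IH]; first by rewrite mulr0n Abd0.
rewrite mulrS mulSn; apply: leq_trans (Abd_sub _ _ _) _.
by rewrite leq_add2l.
Qed.

Lemma eb_scale_le (S : seq V) Q k :
  (edge_boundary (scale_ms k S) Q <= k * edge_boundary S Q)%N.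
Proof.
rewrite !eb_sum /scale_ms big_map big_distrr /=.
by apply: leq_sum => s _; apply: Abd_mul.
Qed.

Lemma eb_scale_eq (S : seq V) Q k (g : V -> V) :
  injective g -> (forall x y, g (x + y) = g x + g y) ->
  (forall x, g x = x *+ k) ->
  edge_boundary (scale_ms k S) Q = edge_boundary S (g @^-1: Q).
Proof.
move=> ginj gadd gk.
rewrite !eb_sum /scale_ms big_map; apply: eq_bigr => s _.
rewrite /Abd (reindex g) /=; last first.
  by apply: onW_bij; apply: injF_bij.
apply: eq_big => [v|v _]; first by rewrite inE.
by rewrite -gk -gadd inE.
Qed.

Lemma size_multi p (S : seq V) : size (multi_ms p S) = ((p.-1)./2 * size S)%N.
Proof.
rewrite /multi_ms size_flatten /shape -map_comp.
elim: (p.-1)./2 (1%N) => [|m IH] a //=.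
by rewrite /scale_ms size_map IH.
Qed.

Lemma eb_multi p (S : seq V) Q : edge_boundary (multi_ms p S) Q =
  (\sum_(k <- iota 1 (p.-1)./2) edge_boundary (scale_ms k S) Q)%N.
Proof.
rewrite eb_sum /multi_ms big_flatten /= big_map; apply: eq_bigr => k _.
by rewrite eb_sum.
Qed.

Lemma eb_le (S : seq V) Q : (edge_boundary S Q <= size S * #|Q|)%N.
Proof.
rewrite /edge_boundary mulnC -sum_nat_const.
by apply: leq_sum => v _; apply: count_size.
Qed.

End Comb.

Lemma gauss m : (2 * \sum_(k <- iota 1 m) k = m * m.+1)%N.
Proof.
have E : forall m, iota 1 m = index_iota 1 m.+1 by move=> k; rewrite /index_iota subn1.
elim: m => [|m IH]; first by rewrite big_nil.
rewrite E big_nat_recr //= -E mulnDr IH; lia.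
Qed.

Lemma min_ind (P : rat -> Prop) x y : P x -> P y -> P (Order.min x y).
Proof. by rewrite minEle; case: ifP. Qed.

Theorem lemmaC2 (p n : nat) (S : seq 'rV['Z_p]_n) :
  prime p -> odd p -> (0 < n)%N -> (0 < size S)%N -> symmetric_ms S ->
  cheeger S <= cheeger (multi_ms p S) /\
  cheeger (multi_ms p S) <= (p.+1)%:R / 4%:R * cheeger S.
Proof.
move=> pr op n0 S0 _.
set V := 'rV['Z_p]_n.
set m := (p.-1)./2.
have p1 := prime_gt1 pr.
have hpm : p = (m.*2).+1.
  rewrite /m -(odd_halfK op) doubleK odd_halfK // prednK //; lia.
have m0 : (0 < m)%N.
  case: m hpm => // hp; rewrite hp in pr; by [].
have mp : (m < p)%N by rewrite hpm -addnn; lia.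
set N := size S.
have ginj : forall k, (0 < k)%N -> (k <= m)%N -> injective (fun x : V => x *+ k).
  move=> k k0 km x y /= E.
  have U : (k%:R : 'Z_p) \is a GRing.unit.
    rewrite unitZpE // prime_coprime // gtnNdvd //; lia.
  rewrite -[x](scale1r) -[y](scale1r) -(mulVr U) -!scalerA !scaler_nat E //.
set c := cheeger S.
have cle1 : c <= 1 by apply: bigmin_le_id.
have cS : forall Q : {set V}, (0 < #|Q|)%N -> (2 * #|Q| <= #|V|)%N ->
    c <= cond_set S Q.
  move=> Q q0 q2; rewrite /c /cheeger; apply: bigmin_le_cond.
  by rewrite q0 q2.
split.
  rewrite /cheeger; apply: (big_ind (fun y => c <= y)) => //.
    by move=> x y; apply: (min_ind (fun y => c <= y)).
  move=> Q /andP[q0 q2].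
  rewrite /cond_set size_multi -mulnA ler_pdivlMr; last first.
    by rewrite ltr0n !muln_gt0 m0 S0 q0.
  rewrite eb_multi natr_sum.
  have -> : iota 1 m = index_iota 1 m.+1 by rewrite /index_iota subn1.
  have -> : c * (m * (N * #|Q|))%:R = \sum_(1 <= k < m.+1) (c * (N * #|Q|)%:R).
    by rewrite sumr_const_nat subn1 /= natrM mulrCA mulr_natl.
  rewrite !big_nat; apply: ler_sum => k /andP[k0 km].
  have km' : (k <= m)%N by lia.
  have cQ : #|(fun x : V => x *+ k) @^-1: Q| = #|Q| by rewrite card_preimset //; apply: ginj.
  have := cS ((fun x : V => x *+ k) @^-1: Q); rewrite cQ => /(_ q0 q2).
  rewrite /cond_set cQ -(@eb_scale_eq _ S Q k (fun x : V => x *+ k)); last 3 first.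
  - exact: ginj.
  - by move=> x y; rewrite mulrnDl.
  - by [].
  by rewrite ler_pdivlMr // ltr0n muln_gt0 S0 q0.
set c' := cheeger (multi_ms p S).
set K := (p.+1)%:R / 4%:R : rat.
have hK : (p.+1)%:R = 2 * (m.+1)%:R :> rat.
  have -> : (p.+1 = 2 * m.+1)%N by rewrite hpm -muln2; lia.
  by rewrite natrM.
have c'le1 : c' <= 1 by apply: bigmin_le_id.
rewrite /c /cheeger; apply: (big_ind (fun y => c' <= K * y)).
- rewrite mulr1; apply: (le_trans c'le1).
  rewrite /K ler_pdivlMr // mul1r ler_nat; lia.
- by move=> x y; apply: (min_ind (fun y => c' <= K * y)).
move=> Q /andP[q0 q2].
apply: (@le_trans _ _ (cond_set (multi_ms p S) Q)).
  by rewrite /c' /cheeger; apply: bigmin_le_cond; rewrite q0 q2.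
have hnat : (2 * edge_boundary (multi_ms p S) Q <= m * m.+1 * edge_boundary S Q)%N.
  rewrite eb_multi -gauss -mulnA leq_mul2l /= big_distrl /=.
  by apply: leq_sum => k _; apply: eb_scale_le.
have X0 : 0 < (N * #|Q|)%:R :> rat by rewrite ltr0n muln_gt0 S0 q0.
rewrite /cond_set size_multi -mulnA ler_pdivrMr; last first.
  by rewrite ltr0n !muln_gt0 m0 S0 q0.
have -> : K * ((edge_boundary S Q)%:R / (size S * #|Q|)%:R) * (m * (N * #|Q|))%:R
   = (m * m.+1 * edge_boundary S Q)%:R / 2.
  rewrite /K hK !natrM -/N.
  have : (N%:R * #|Q|%:R : rat) != 0 by rewrite -natrM lt0r_neq0.
  move=> H; field; by move: H; rewrite mulf_eq0 negb_or andbC.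
by rewrite ler_pdivlMr // -(natrM _ _ 2) ler_nat mulnC.
Qed.
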